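(* Let $\xi>0$, $\tau>0$, $A_n:=\xi\tau^n n!$ for $n\ge1$, and $R_\ell>0$ for $\ell\ge1$. Define $\Gamma^{[\ell]}_n$ and $\mathbb{B}^{[\ell]}_{n,\lambda}$ recursively by $\Gamma^{[1]}_n:=A_n$ ($n\ge1$); $\Gamma^{[\ell]}_n:=\sum_{\lambda=1}^nA_\lambda R_{\ell-1}^\lambda\mathbb{B}^{[\ell-1]}_{n,\lambda}$ ($\ell\ge2$, $n\ge1$); $\mathbb{B}^{[\ell]}_{n,1}:=\Gamma^{[\ell]}_n$ ($n\ge1$); $\mathbb{B}^{[\ell]}_{n,\lambda}:=\sum_{i=\lambda-1}^{n-1}\binom{n-1}{i}\Gamma^{[\ell]}_{n-i}\mathbb{B}^{[\ell]}_{i,\lambda-1}$ ($\ell\ge1$, $n\ge\lambda\ge2$). Let $P_0:=1$ and $P_k:=\prod_{t=1}^k(\xi\tau R_t)$ for $k\ge1$. Then $$\Gamma^{[\ell]}_n=\mathbb{B}^{[\ell]}_{n,1}=P_{\ell-1}\Big(\sum_{k=0}^{\ell-1}P_k\Big)^{n-1}\xi\,\tau^n\,n!\quad\text{for }\ell\ge1,\ n\ge1,$$ $$\mathbb{B}^{[\ell]}_{n,\lambda}=P_{\ell-1}^\lambda\Big(\sum_{k=0}^{\ell-1}P_k\Big)^{n-\lambda}\xi^\lambda\,\tau^n\,\frac{n!}{\lambda!}\binom{n-1}{\lambda-1}\quad\text{for }\ell\ge1,\ n\ge\lambda\ge1.$$ *)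

(* Defs.v *)
From mathcomp Require Import all_boot all_order all_algebra.
Set Implicit Arguments. Unset Strict Implicit. Unset Printing Implicit Defensive.
Import Order.TTheory GRing.Theory Num.Theory.
Local Open Scope ring_scope.

Section Defs.
Variables (R : realFieldType) (xi tau : R) (Rs : nat -> R).

Definition Aseq (n : nat) : R := xi * tau ^+ n * (n`!)%:R.

(* Given Gamma^[l] as a function G, Bof G lam n = B^[l]_{n,lam}
   (lam >= 1; value at lam = 0 is an unused junk value 0). *)
Fixpoint Bof (G : nat -> R) (lam : nat) (n : nat) : R :=
  match lam with
  | 0 => 0
  | S k => if k is 0 then G n
           else \sum_(k <= i < n) ('C(n.-1, i))%:R * G (n - i)%N * Bof G k i
  end.

(* Gam l n = Gamma^[l]_n for l >= 1 (Gam 0 is an unused junk value 0). *)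
Fixpoint Gam (l : nat) : nat -> R :=
  match l with
  | 0 => fun _ => 0
  | S m => if m is 0 then Aseq
           else fun n => \sum_(1 <= lam < n.+1)
                   Aseq lam * Rs m ^+ lam * Bof (Gam m) lam n
  end.

Definition Pk (k : nat) : R := \prod_(1 <= t < k.+1) (xi * tau * Rs t).

End Defs.

(* Main.v *)
Require Import Defs.
From mathcomp Require Import all_boot all_order all_algebra.
From mathcomp Require Import zify ring.
Import Order.TTheory GRing.Theory Num.Theory.

Lemma hockey k n : \sum_(k.+1 <= i < n.+1) 'C(i.-1, k) = 'C(n, k.+1).
Proof.
elim: n => [|n IH]; first by rewrite big_geq // bin0n.
case: (leqP k n) => h.
  rewrite big_nat_recr /=; last lia. by rewrite IH binS.
by rewrite big_geq ?bin_small //; lia.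
Qed.

Lemma dbl k n : \sum_(k.+1 <= i < n) (n - i) * 'C(i.-1, k) = 'C(n, k.+2).
Proof.
elim: n => [|n IH]; first by rewrite big_geq // bin0n.
case: (ltnP k n) => h; last by rewrite big_geq ?bin_small //; lia.
case: n IH h => [|m] IH h; first by [].
rewrite big_nat_recr /=; last by lia.
rewrite (eq_big_nat _ _ (F2 := fun i => (m.+1 - i) * 'C(i.-1, k) + 'C(i.-1,k))); last first.
  move=> i /andP [_ hi]; have -> : (m.+2 - i = (m.+1 - i) + 1)%N by lia. by rewrite mulnDl mul1n.
rewrite big_split /= IH hockey subSnn mul1n.
by rewrite -addnA -binS -binS.
Qed.

Local Open Scope ring_scope.


Lemma keynat k n : (k.+1 < n)%N ->
  (k.+2 * \sum_(k.+1 <= i < n) ((n.-1)`! * (n - i) * 'C(i.-1, k)) = n`! * 'C(n.-1, k.+1))%N.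
Proof.
move=> h.
have -> : (\sum_(k.+1 <= i < n) ((n.-1)`! * (n - i) * 'C(i.-1, k)) =
   (n.-1)`! * \sum_(k.+1 <= i < n) ((n - i) * 'C(i.-1, k)))%N.
  by rewrite big_distrr /=; apply: eq_bigr => i _; rewrite mulnA.
rewrite dbl mulnCA -mul_bin_diag.
case: n h => [|m] h //=.
by rewrite factS mulnA (mulnC m`!).
Qed.

Section S.
Variables (R : realFieldType) (xi tau : R).

Lemma Bof_clear (G : nat -> R) (c a : R) :
  (forall n, (0 < n)%N -> G n = c * a ^+ n.-1 * xi * tau ^+ n * (n`!)%:R) ->
  forall k n, (k < n)%N ->
  Bof G k.+1 n * (k.+1)`!%:R =
    c ^+ k.+1 * a ^+ (n - k.+1) * xi ^+ k.+1 * tau ^+ n * (n`!)%:R * ('C(n.-1, k))%:R.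
Proof.
move=> HG; elim=> [|k IH] n hn.
  rewrite /= HG; last by lia.
  rewrite bin0 subn1 (_ : (1`!)%:R = 1 :> R) // !expr1; ring.
rewrite /= factS natrM (mulrC (k.+2)%:R) mulrA big_distrl /=.
rewrite (eq_big_nat _ _ (F2 := fun i => (c ^+ k.+2 * a ^+ (n - k.+2) * xi ^+ k.+2 * tau ^+ n) *
   (((n.-1)`! * (n - i) * 'C(i.-1, k))%N%:R))); last first.
  move=> i /andP [h1 h2].
  rewrite -mulrA IH; last by lia.
  rewrite HG; last by lia.
  have e1 : a ^+ (n - i).-1 * a ^+ (i - k.+1) = a ^+ (n - k.+2).
    by rewrite -exprD; congr (_ ^+ _); lia.
  have e2 : tau ^+ (n - i) * tau ^+ i = tau ^+ n.
    by rewrite -exprD; congr (_ ^+ _); lia.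
  have e3 : ('C(n.-1, i) * (n - i)`! * i`! = (n.-1)`! * (n - i))%N.
    have -> : (n - i = (n.-1 - i).+1)%N by lia.
    rewrite factS -(@bin_fact n.-1 i); last by lia.
    ring.
  rewrite -e1 -e2 -e3 !natrM !exprS; ring.
rewrite -big_distrr /= -natr_sum -mulrA -natrM mulnC keynat //.
rewrite natrM; ring.
Qed.
End S.

Lemma Gam_S (R : realFieldType) (xi tau : R) (Rs : nat -> R) l n :
  Gam xi tau Rs l.+2 n = \sum_(1 <= lam < n.+1)
                   Aseq xi tau lam * Rs l.+1 ^+ lam * Bof (Gam xi tau Rs l.+1) lam n.
Proof. by []. Qed.

Lemma Gam_formula (R : realFieldType) (xi tau : R) (Rs : nat -> R) l n : (0 < n)%N ->
  Gam xi tau Rs l.+1 n = Pk xi tau Rs l * (\sum_(0 <= k < l.+1) Pk xi tau Rs k) ^+ n.-1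
         * xi * tau ^+ n * (n`!)%:R.
Proof.
elim: l n => [|l IH] n hn.
  rewrite /= /Pk big_geq // big_nat1 /Pk big_geq // expr1n /Aseq; by rewrite !mul1r.
set c := Pk xi tau Rs l.
set a := \sum_(0 <= k < l.+1) Pk xi tau Rs k.
have hP : Pk xi tau Rs l.+1 = c * (xi * tau * Rs l.+1) by rewrite /Pk big_nat_recr.
have hS : \sum_(0 <= k < l.+2) Pk xi tau Rs k = a + Pk xi tau Rs l.+1 by rewrite big_nat_recr.
rewrite hS hP.
case: n hn => [|m] _ //.
rewrite Gam_S big_add1.
rewrite (eq_big_nat _ _ (F2 := fun j => (xi * tau ^+ m.+1 * (m.+1)`!%:R * (c * (xi * tau * Rs l.+1))) *
   (a ^+ (m - j) * (c * (xi * tau * Rs l.+1)) ^+ j *+ 'C(m, j)))); last first.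
  move=> j /andP [_ hj].
  have hb := @Bof_clear R xi tau _ _ _ IH j m.+1 hj.
  rewrite /Aseq.
  transitivity (xi * tau ^+ j.+1 * Rs l.+1 ^+ j.+1 *
     (Bof (Gam xi tau Rs l.+1) j.+1 m.+1 * (j.+1)`!%:R)); first by ring.
  rewrite hb subSS -[_ *+ 'C(m, j)]mulr_natr !exprMn !exprS /c /a; ring.
rewrite -big_distrr /= big_mkord -exprDn /c /a /=; ring.
Qed.

Theorem lemma6p3 (R : realFieldType) (xi tau : R) (Rs : nat -> R) :
  0 < xi -> 0 < tau -> (forall l : nat, (1 <= l)%N -> 0 < Rs l) ->
  (forall l n : nat, (1 <= l)%N -> (1 <= n)%N ->
     Gam xi tau Rs l n = Bof (Gam xi tau Rs l) 1 n /\
     Bof (Gam xi tau Rs l) 1 n =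
       Pk xi tau Rs l.-1 * (\sum_(0 <= k < l) Pk xi tau Rs k) ^+ n.-1
         * xi * tau ^+ n * (n`!)%:R) /\
  (forall l n lam : nat, (1 <= l)%N -> (1 <= lam)%N -> (lam <= n)%N ->
     Bof (Gam xi tau Rs l) lam n =
       Pk xi tau Rs l.-1 ^+ lam * (\sum_(0 <= k < l) Pk xi tau Rs k) ^+ (n - lam)
         * xi ^+ lam * tau ^+ n * ((n`!)%:R / (lam`!)%:R)
         * ('C(n.-1, lam.-1))%:R).
Proof.
move=> _ _ _; split.
  move=> [|l] n // _ hn; split=> //.
  exact: Gam_formula.
move=> [|l] n [|k] // _ _ hkn.
have hb := @Bof_clear R xi tau _ _ _ (fun m hm => @Gam_formula R xi tau Rs l m hm) k n hkn.
have hf : (k.+1)`!%:R != 0 :> R by rewrite pnatr_eq0 -lt0n fact_gt0.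
apply: (mulIf hf); rewrite hb /=.
field; exact: hf.
Qed.
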